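(* For $k\in\mathbb N$ and $i\in\{1,2\}$ let $\mathcal E_k^i$ and $\tilde{\mathcal E}_k^i$ be the Hamiltonian vector fields of $h_k=\frac1k\Re\operatorname{tr}(J^k)$ and $\tilde h_k=\frac1k\Im\operatorname{tr}(J^k)$ with respect to $\{\ ,\ \}_i^{\mathrm{red}}$. Then $$\mathcal E_k^2[q_j]=\mathcal E_{k+1}^1[q_j]=\Re(J^k)_{jj},\qquad \mathcal E_k^2[J]=\mathcal E_{k+1}^1[J]=\tfrac12\big[R(q)(J^k+(J^k)^* )+((J^k)^*-J^k),J\big],$$ $$\tilde{\mathcal E}_k^2[q_j]=\tilde{\mathcal E}_{k+1}^1[q_j]=\Re(-\mathrm iJ^k)_{jj},\qquad \tilde{\mathcal E}_k^2[J]=\tilde{\mathcal E}_{k+1}^1[J]=\tfrac12\big[\mathrm iR(q)((J^k)^*-J^k)+\mathrm i(J^k+(J^k)^* ),J\big].$$ All these vector fields are tangent to the submanifold $\mathfrak M_{0,-}^{\mathrm{reg}}=\{(e^q,J)\in\mathfrak M_0^{\mathrm{reg}}:J^+=0\}$ and to $\mathfrak M_{0,+}^{\mathrm{reg}}=\{(e^q,J)\in\mathfrak M_0^{\mathrm{reg}}:J^-=0\}$. The restrictions $\mathcal V_k^i$ of $\mathcal E_k^i$ to $\mathfrak M_{0,-}^{\mathrm{reg}}$ satisfy $$\mathcal V_k^2[q_j]=\mathcal V_{k+1}^1[q_j]=((J^-)^k)_{jj},\qquad \mathcal V_k^2[J^-]=\mathcal V_{k+1}^1[J^-]=[R(q)(J^-)^k,J^-],$$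 while the restrictions of all $\tilde{\mathcal E}_k^i$ to $\mathfrak M_{0,-}^{\mathrm{reg}}$ vanish. Denoting by $\mathcal U_k^i,\tilde{\mathcal U}_k^i$ the restrictions of $\mathcal E_k^i,\tilde{\mathcal E}_k^i$ to $\mathfrak M_{0,+}^{\mathrm{reg}}$, for all $l\in\mathbb N$: $\mathcal U^2_{2l-1}=\mathcal U^1_{2l}=0$, $\tilde{\mathcal U}^2_{2l}=\tilde{\mathcal U}^1_{2l+1}=0$, and $$\mathcal U^2_{2l}[q_j]=\mathcal U^1_{2l+1}[q_j]=\Re((J^+)^{2l})_{jj},\quad \mathcal U^2_{2l}[J^+]=\mathcal U^1_{2l+1}[J^+]=[R(q)(J^+)^{2l},J^+],$$ $$\tilde{\mathcal U}^2_{2l-1}[q_j]=\tilde{\mathcal U}^1_{2l}[q_j]=\Re(-\mathrm i(J^+)^{2l-1})_{jj},\quad \tilde{\mathcal U}^2_{2l-1}[J^+]=\tilde{\mathcal U}^1_{2l}[J^+]=[-\mathrm iR(q)(J^+)^{2l-1},J^+].$$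
   Context: $\mathcal G=\mathfrak{gl}(n,\mathbb C)$ (real Lie algebra) with $\langle X,Y\rangle=\Re\operatorname{tr}(XY)$. $\mathcal G^+=\mathfrak u(n)$ (anti-Hermitian), $\mathcal G^-=\mathrm i\,\mathfrak u(n)$ (Hermitian); $X=X^++X^-$ with $X^\pm=\frac12(X\mp X^* )$; $\mathcal G^\pm_0$ are the diagonal matrices in $\mathcal G^\pm$ and $X^-_0$ denotes the diagonal part of $X^-$. $\mathfrak M_0^{\mathrm{reg}}=\{(e^q,J): J\in\mathcal G,\ q=\mathrm{diag}(q_1,\dots,q_n),\ q_i\in\mathbb R,\ q_1>\dots>q_n\}$. For $f\in C^\infty(\mathfrak M_0^{\mathrm{reg}})$: $\nabla_1f\in\mathcal G^-_0$ with $\langle\nabla_1f,X_0\rangle=\frac{d}{dt}|_0f(e^{q+tX_0},J)$ ($X_0\in\mathcal G_0^-$), $d_2f\in\mathcal G$ with $\langle d_2f,X\rangle=\frac{d}{dt}|_0f(e^q,J+tX)$, $\nabla_2f=J\,d_2f$, $\nabla_2'f=(d_2f)J$. $R(q)\in\mathrm{End}(\mathcal G)$: $(R(q)X)_{ii}=0$, $(R(q)X)_{ij}=X_{ij}\coth(q_i-q_j)$ for $i\ne j$. The following formulas define anti-symmetric bi-derivations on $C^\infty(\mathfrak M_0^{\mathrm{reg}})$ (derivatives at $(e^q,J)$): $\{f,h\}_1^{\mathrm{red}}=\langle\nabla_1f,(d_2h)^-_0\rangle-\langle\nabla_1h,(d_2f)^-_0\rangle+\langle R(q)[d_2f,J]^+,(d_2h)^-\rangle-\langle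 R(q)[d_2h,J]^+,(d_2f)^-\rangle+\langle J^+,[(d_2f)^-,(d_2h)^-]-[(d_2f)^+,(d_2h)^+]\rangle$; $2\{f,h\}_2^{\mathrm{red}}=\langle\nabla_1f,(\nabla_2h+\nabla_2'h)^-_0\rangle-\langle\nabla_1h,(\nabla_2f+\nabla_2'f)^-_0\rangle+\langle R(q)[d_2f,J]^+,(\nabla_2h+\nabla_2'h)^-\rangle-\langle R(q)[d_2h,J]^+,(\nabla_2f+\nabla_2'f)^-\rangle+\langle(\nabla_2f)^-,(\nabla_2'h)^-\rangle+\langle(\nabla_2'f)^+,(\nabla_2h)^+\rangle-\langle(\nabla_2'f)^-,(\nabla_2h)^-\rangle-\langle(\nabla_2f)^+,(\nabla_2'h)^+\rangle$. A vector field $\mathcal E$ on $\mathfrak M_0^{\mathrm{reg}}$ is encoded by the functions $\mathcal E[q]$ ($\mathcal G_0^-$-valued, with diagonal entries $\mathcal E[q_j]$) and $\mathcal E[J]$ ($\mathcal G$-valued), so that $\mathcal E[f]=\langle\nabla_1f,\mathcal E[q]\rangle+\langle d_2f,\mathcal E[J]\rangle$; we write $\mathcal E[J^\pm]=(\mathcal E[J])^\pm$. For a $\mathbb T^n$-invariant $h$ (invariant under $(e^q,J)\mapsto(e^q,\tau J\tau^{-1})$, $\tau$ diagonal unitary), its Hamiltonian vector field w.r.t. $\{\ ,\ \}_i^{\mathrm{red}}$ is the vector field $\mathcal E^i_h$ with $\mathcal E_h^i[f]=\{f,h\}_i^{\mathrm{red}}$ for all $f\in C^\infty(\mathfrak M_0^{\mathrm{reg}})$.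 *)

(* Defs.v *)
From HB Require Import structures.
From mathcomp Require Import all_boot all_order all_algebra.
From mathcomp Require Import all_classical all_reals all_analysis.
From mathcomp Require Import complex.

Set Implicit Arguments.
Unset Strict Implicit.
Unset Printing Implicit Defensive.

Import Order.TTheory GRing.Theory Num.Theory.
Local Open Scope ring_scope.

Definition ci {R : realType} : R[i] := Complex 0 1.
Definition cre {R : realType} (z : R[i]) : R := complex.Re z.
Definition cim {R : realType} (z : R[i]) : R := complex.Im z.
Definition rc {R : realType} (x : R) : R[i] := Complex x 0.

Definition adj {R : realType} {n : nat} (X : 'M[R[i]]_n) : 'M[R[i]]_n :=
  \matrix_(a, b) conjc (X b a).

Definition plusp {R : realType} {n : nat} (X : 'M[R[i]]_n) : 'M[R[i]]_n :=
  (2%:R : R[i])^-1 *: (X - adj X).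
Definition minusp {R : realType} {n : nat} (X : 'M[R[i]]_n) : 'M[R[i]]_n :=
  (2%:R : R[i])^-1 *: (X + adj X).

Definition diag0 {R : realType} {n : nat} (X : 'M[R[i]]_n) : 'M[R[i]]_n :=
  \matrix_(a, b) (if a == b then X a b else 0).

Definition ip {R : realType} {n : nat} (X Y : 'M[R[i]]_n) : R :=
  cre (\tr (X *m Y)).

Definition lie {R : realType} {n : nat} (X Y : 'M[R[i]]_n) : 'M[R[i]]_n :=
  X *m Y - Y *m X.

Definition coth {R : realType} (x : R) : R :=
  (expR x + expR (- x)) / (expR x - expR (- x)).

Definition Rq {R : realType} {n : nat} (q : 'I_n -> R) (X : 'M[R[i]]_n)
  : 'M[R[i]]_n :=
  \matrix_(a, b) (if a == b then 0 else X a b * rc (coth (q a - q b))).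

(* The manifold M_0^reg.  A point (e^q, J) is encoded by (q, J) with       *)
(* q : 'I_n -> R the diagonal entries of q; functions on M_0^reg are       *)
(* functions of (q, J) (their values off M_0^reg are irrelevant).          *)

Definition reg {R : realType} {n : nat} (q : 'I_n -> R) : Prop :=
  forall a b : 'I_n, (a < b)%N -> q b < q a.

Definition fn (R : realType) (n : nat) := ('I_n -> R) -> 'M[R[i]]_n -> R.

Definition line {R : realType} {n : nat} (f : fn R n) (q : 'I_n -> R)
  (J : 'M[R[i]]_n) (v : ('I_n -> R) * 'M[R[i]]_n) : R -> R :=
  fun t => f (fun k => q k + t * v.1 k) (J + rc t *: v.2).

Definition dirD {R : realType} {n : nat} (v : ('I_n -> R) * 'M[R[i]]_n)
  (f : fn R n) : fn R n :=
  fun q J => derive1 (line f q J v) 0.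

Fixpoint iterD {R : realType} {n : nat} (vs : seq (('I_n -> R) * 'M[R[i]]_n))
  (f : fn R n) : fn R n :=
  match vs with
  | [::] => f
  | v :: vs' => dirD v (iterD vs' f)
  end.

Definition cont_at {R : realType} {n : nat} (g : fn R n) (q : 'I_n -> R)
  (J : 'M[R[i]]_n) : Prop :=
  forall e : R, 0 < e -> exists2 d : R, 0 < d &
    forall (q' : 'I_n -> R) (J' : 'M[R[i]]_n), (forall k, `|q' k - q k| < d) ->
      (forall a b, `|J' a b - J a b| < rc d) -> `|g q' J' - g q J| < e.

(* f is C^oo on M_0^reg (an open subset of R^n x gl(n,C)): all iterated
   directional derivatives exist and are continuous on M_0^reg. *)
Definition smooth {R : realType} {n : nat} (f : fn R n) : Prop :=
  forall vs : seq (('I_n -> R) * 'M[R[i]]_n), forall q J, reg q ->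
    cont_at (iterD vs f) q J /\
    (forall v, derivable (line (iterD vs f) q J v) 0 1).

(* nabla_1 f in G_0^- : <nabla_1 f, X_0> = d/dt f(e^{q+tX_0}, J) *)
Definition nabla1 {R : realType} {n : nat} (f : fn R n) (q : 'I_n -> R)
  (J : 'M[R[i]]_n) : 'M[R[i]]_n :=
  \matrix_(a, b) (if a == b
                  then rc (dirD ((fun k => (k == a)%:R), 0) f q J)
                  else 0).

(* d_2 f in G : <d_2 f, X> = d/dt f(e^q, J + tX).  Writing out the defining
   identity on the real basis E_ba, i E_ba of G gives
   (d_2 f)_ab = D_{E_ba} f - i D_{i E_ba} f. *)
Definition dir2 {R : realType} {n : nat} (f : fn R n) (q : 'I_n -> R)
  (J : 'M[R[i]]_n) (X : 'M[R[i]]_n) : R :=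
  dirD ((fun _ => 0), X) f q J.

Definition d2 {R : realType} {n : nat} (f : fn R n) (q : 'I_n -> R)
  (J : 'M[R[i]]_n) : 'M[R[i]]_n :=
  \matrix_(a, b) (rc (dir2 f q J (delta_mx b a))
                  - ci * rc (dir2 f q J (ci *: delta_mx b a))).

Definition nabla2 {R : realType} {n : nat} (f : fn R n) q (J : 'M[R[i]]_n) :=
  J *m d2 f q J.
Definition nabla2' {R : realType} {n : nat} (f : fn R n) q (J : 'M[R[i]]_n) :=
  d2 f q J *m J.

Definition br1 {R : realType} {n : nat} (f h : fn R n) (q : 'I_n -> R)
  (J : 'M[R[i]]_n) : R :=
  let df := d2 f q J in let dh := d2 h q J in
  ip (nabla1 f q J) (diag0 (minusp dh)) - ip (nabla1 h q J) (diag0 (minusp df))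
  + ip (Rq q (plusp (lie df J))) (minusp dh)
  - ip (Rq q (plusp (lie dh J))) (minusp df)
  + ip (plusp J) (lie (minusp df) (minusp dh) - lie (plusp df) (plusp dh)).

Definition br2 {R : realType} {n : nat} (f h : fn R n) (q : 'I_n -> R)
  (J : 'M[R[i]]_n) : R :=
  let df := d2 f q J in let dh := d2 h q J in
  let Nf := nabla2 f q J in let Nf' := nabla2' f q J in
  let Nh := nabla2 h q J in let Nh' := nabla2' h q J in
  (2%:R)^-1 *
  (ip (nabla1 f q J) (diag0 (minusp (Nh + Nh')))
   - ip (nabla1 h q J) (diag0 (minusp (Nf + Nf')))
   + ip (Rq q (plusp (lie df J))) (minusp (Nh + Nh'))
   - ip (Rq q (plusp (lie dh J))) (minusp (Nf + Nf'))
   + ip (minusp Nf) (minusp Nh') + ip (plusp Nf') (plusp Nh)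
   - ip (minusp Nf') (minusp Nh) - ip (plusp Nf) (plusp Nh')).

(* A vector field E on M_0^reg is encoded by E[q] (given by its diagonal
   entries E[q_j], EQ q J j) and E[J] (EJ q J). *)
Definition vfq (R : realType) (n : nat) := ('I_n -> R) -> 'M[R[i]]_n -> 'I_n -> R.
Definition vfJ (R : realType) (n : nat) := ('I_n -> R) -> 'M[R[i]]_n -> 'M[R[i]]_n.

Definition diagq {R : realType} {n : nat} (x : 'I_n -> R) : 'M[R[i]]_n :=
  \matrix_(a, b) (if a == b then rc (x a) else 0).

Definition vf_apply {R : realType} {n : nat} (EQ : vfq R n) (EJ : vfJ R n)
  (f : fn R n) (q : 'I_n -> R) (J : 'M[R[i]]_n) : R :=
  ip (nabla1 f q J) (diagq (EQ q J)) + ip (d2 f q J) (EJ q J).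

Definition IsHam {R : realType} {n : nat}
  (br : fn R n -> fn R n -> ('I_n -> R) -> 'M[R[i]]_n -> R)
  (h : fn R n) (EQ : vfq R n) (EJ : vfJ R n) : Prop :=
  forall f : fn R n, smooth f ->
    forall q J, reg q -> vf_apply EQ EJ f q J = br f h q J.

Definition IsHam1 {R : realType} {n : nat} := @IsHam R n br1.
Definition IsHam2 {R : realType} {n : nat} := @IsHam R n br2.

Definition agree {R : realType} {n : nat} (EQ : vfq R n) (EJ : vfJ R n)
  (FQ : vfq R n) (FJ : vfJ R n) : Prop :=
  forall q J, reg q -> (forall j, EQ q J j = FQ q J j) /\ EJ q J = FJ q J.

Definition hk {R : realType} {n : nat} (k : nat) : fn R n :=
  fun _ J => (k%:R)^-1 * cre (\tr (J ^+ k)).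
Definition htk {R : realType} {n : nat} (k : nat) : fn R n :=
  fun _ J => (k%:R)^-1 * cim (\tr (J ^+ k)).

(* Main.v *)
Require Import Defs.
From HB Require Import structures.
From mathcomp Require Import all_boot all_order all_algebra.
From mathcomp Require Import all_classical all_reals all_analysis.
From mathcomp Require Import complex ring lra zify.
Import Order.TTheory GRing.Theory Num.Theory.
Local Open Scope ring_scope.


Lemma creD {R : realType} (a b : R[i]) : cre (a + b) = cre a + cre b.
Proof. by case: a; case: b. Qed.
Lemma creN {R : realType} (a : R[i]) : cre (- a) = - cre a.
Proof. by case: a. Qed.
Lemma creB {R : realType} (a b : R[i]) : cre (a - b) = cre a - cre b.
Proof. by rewrite creD creN. Qed.
Lemma cre0 {R : realType} : cre (0 : R[i]) = 0.
Proof. by []. Qed.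
Lemma creZ {R : realType} (r : R) (a : R[i]) : cre (rc r * a) = r * cre a.
Proof. by case: a => x y; rewrite /cre /rc /= mul0r subr0. Qed.
Lemma cre_conj {R : realType} (a : R[i]) : cre (conjc a) = cre a.
Proof. by case: a. Qed.
Lemma cre_sum {R : realType} (I : finType) (F : I -> R[i]) :
  cre (\sum_(i : I) F i) = \sum_(i : I) cre (F i).
Proof.
elim/big_rec2: _ => [|i x y _ <-]; first by []. by rewrite creD.
Qed.
Lemma rcE {R : realType} (a : R) : rc a = (a%:C)%C.
Proof. by []. Qed.
Lemma rcM {R : realType} (a b : R) : rc (a * b) = rc a * rc b.
Proof. by rewrite !rcE rmorphM. Qed.
Lemma rcD {R : realType} (a b : R) : rc (a + b) = rc a + rc b.
Proof. by rewrite !rcE rmorphD. Qed.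
Lemma rcN {R : realType} (a : R) : rc (- a) = - rc a.
Proof. by rewrite !rcE rmorphN. Qed.
Lemma rc_conj {R : realType} (a : R) : conjc (rc a) = rc a.
Proof. by rewrite /rc /conjc oppr0. Qed.
Lemma half_rc {R : realType} : (2%:R : R[i])^-1 = rc (2%:R^-1).
Proof.
have -> : rc (2%:R^-1 : R) = ((2%:R^-1 : R)%:C)%C by [].
by rewrite fmorphV rmorph_nat.
Qed.
Lemma rc_nat {R : realType} (m : nat) : rc (m%:R : R) = m%:R.
Proof. by rewrite rcE rmorph_nat. Qed.
Lemma conjcM' {R : realType} (a b : R[i]) : conjc (a * b) = conjc a * conjc b.
Proof. exact: rmorphM. Qed.
Lemma conjcD' {R : realType} (a b : R[i]) : conjc (a + b) = conjc a + conjc b.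
Proof. exact: rmorphD. Qed.


Section Alg.
Context {R : realType} {n : nat}.
Implicit Types (A B C X Y Z : 'M[R[i]]_n).

Lemma trN X : \tr (- X) = - \tr X.
Proof. exact: raddfN. Qed.

Lemma adjK X : adj (adj X) = X.
Proof. by apply/matrixP => a b; rewrite !mxE conjcK. Qed.
Lemma adjD X Y : adj (X + Y) = adj X + adj Y.
Proof. by apply/matrixP => a b; rewrite !mxE rmorphD. Qed.
Lemma adjN X : adj (- X) = - adj X.
Proof. by apply/matrixP => a b; rewrite !mxE rmorphN. Qed.
Lemma adjB X Y : adj (X - Y) = adj X - adj Y.
Proof. by rewrite adjD adjN. Qed.
Lemma adj0 : adj (0 : 'M[R[i]]_n) = 0.
Proof. by apply/matrixP => a b; rewrite !mxE rmorph0. Qed.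
Lemma adjZ (c : R[i]) X : adj (c *: X) = conjc c *: adj X.
Proof. by apply/matrixP => a b; rewrite !mxE rmorphM. Qed.
Lemma adjZr (r : R) X : adj (rc r *: X) = rc r *: adj X.
Proof. by rewrite adjZ rc_conj. Qed.
Lemma adjM X Y : adj (X *m Y) = adj Y *m adj X.
Proof.
apply/matrixP => a b; rewrite !mxE rmorph_sum; apply: eq_bigr => c _.
by rewrite !mxE rmorphM mulrC.
Qed.
Lemma tr_adj X : \tr (adj X) = conjc (\tr X).
Proof. by rewrite /mxtrace rmorph_sum; apply: eq_bigr => a _; rewrite mxE. Qed.

Lemma ipDl X Y Z : ip (X + Y) Z = ip X Z + ip Y Z.
Proof. by rewrite /ip mulmxDl mxtraceD creD. Qed.
Lemma ipDr X Y Z : ip X (Y + Z) = ip X Y + ip X Z.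
Proof. by rewrite /ip mulmxDr mxtraceD creD. Qed.
Lemma ipNl X Y : ip (- X) Y = - ip X Y.
Proof. by rewrite /ip mulNmx trN creN. Qed.
Lemma ipNr X Y : ip X (- Y) = - ip X Y.
Proof. by rewrite /ip mulmxN trN creN. Qed.
Lemma ipBl X Y Z : ip (X - Y) Z = ip X Z - ip Y Z.
Proof. by rewrite ipDl ipNl. Qed.
Lemma ipBr X Y Z : ip X (Y - Z) = ip X Y - ip X Z.
Proof. by rewrite ipDr ipNr. Qed.
Lemma ip0l X : ip 0 X = 0.
Proof. by rewrite /ip mul0mx mxtrace0. Qed.
Lemma ip0r X : ip X 0 = 0.
Proof. by rewrite /ip mulmx0 mxtrace0. Qed.
Lemma ipZl (r : R) X Y : ip (rc r *: X) Y = r * ip X Y.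
Proof. by rewrite /ip -scalemxAl mxtraceZ creZ. Qed.
Lemma ipZr (r : R) X Y : ip X (rc r *: Y) = r * ip X Y.
Proof. by rewrite /ip -scalemxAr mxtraceZ creZ. Qed.
Lemma ipC X Y : ip X Y = ip Y X.
Proof. by rewrite /ip mxtrace_mulC. Qed.
Lemma ip_adj X Y : ip (adj X) (adj Y) = ip X Y.
Proof. by rewrite /ip -adjM tr_adj cre_conj mxtrace_mulC. Qed.
Lemma ip_adjl X Y : ip (adj X) Y = ip X (adj Y).
Proof. by rewrite -{1}(adjK Y) ip_adj. Qed.

Lemma plusp_def X : plusp X = rc 2%:R^-1 *: (X - adj X).
Proof. by rewrite /plusp half_rc. Qed.
Lemma minusp_def X : minusp X = rc 2%:R^-1 *: (X + adj X).
Proof. by rewrite /minusp half_rc. Qed.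

Lemma ip_pl X Y : ip (plusp X) Y = ip X (plusp Y).
Proof. by rewrite !plusp_def ipZl ipZr ipBl ipBr ip_adjl. Qed.
Lemma ip_ml X Y : ip (minusp X) Y = ip X (minusp Y).
Proof. by rewrite !minusp_def ipZl ipZr ipDl ipDr ip_adjl. Qed.

Lemma ip_lie X Y Z : ip (lie X Y) Z = ip X (lie Y Z).
Proof.
rewrite /ip /lie mulmxBl mulmxBr !mxtraceD !trN -!mulmxA.
by congr (cre (_ - _)); rewrite mxtrace_mulC -mulmxA.
Qed.

Lemma pluspD X Y : plusp (X + Y) = plusp X + plusp Y.
Proof. by rewrite !plusp_def adjD -scalerDr opprD addrACA. Qed.
Lemma minuspD X Y : minusp (X + Y) = minusp X + minusp Y.
Proof. by rewrite !minusp_def adjD -scalerDr addrACA. Qed.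
Lemma pluspN X : plusp (- X) = - plusp X.
Proof. by rewrite !plusp_def adjN -scalerN opprB opprK addrC. Qed.
Lemma minuspN X : minusp (- X) = - minusp X.
Proof. by rewrite !minusp_def adjN -scalerN opprD. Qed.
Lemma pluspB X Y : plusp (X - Y) = plusp X - plusp Y.
Proof. by rewrite pluspD pluspN. Qed.
Lemma minuspB X Y : minusp (X - Y) = minusp X - minusp Y.
Proof. by rewrite minuspD minuspN. Qed.
Lemma plusp0 : plusp (0 : 'M[R[i]]_n) = 0.
Proof. by rewrite plusp_def adj0 subr0 scaler0. Qed.

Lemma half2 (M : 'M[R[i]]_n) : rc 2%:R^-1 *: (M + M) = M.
Proof.
rewrite -[M + M]mulr2n -[M *+ 2]scaler_nat scalerA -rc_nat -rcM mulVf ?pnatr_eq0 //.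
by rewrite rcE rmorph1 scale1r.
Qed.

Lemma plusp_minusp X : plusp X + minusp X = X.
Proof.
by rewrite plusp_def minusp_def -scalerDr addrACA addNr addr0 half2.
Qed.
Lemma minusp_plusp X : minusp X - plusp X = adj X.
Proof.
by rewrite plusp_def minusp_def -scalerBr opprB addrC addrA subrK half2.
Qed.

Lemma plusp_herm Z : adj Z = Z -> plusp Z = 0.
Proof. by move=> h; rewrite plusp_def h subrr scaler0. Qed.
Lemma minusp_herm Z : adj Z = Z -> minusp Z = Z.
Proof. by move=> h; rewrite minusp_def h half2. Qed.
Lemma plusp_anti Z : adj Z = - Z -> plusp Z = Z.
Proof. by move=> h; rewrite plusp_def h opprK half2. Qed.
Lemma minusp_anti Z : adj Z = - Z -> minusp Z = 0.
Proof. by move=> h; rewrite minusp_def h subrr scaler0. Qed.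

Lemma adj_plusp X : adj (plusp X) = - plusp X.
Proof. by rewrite plusp_def adjZr adjB adjK -scalerN opprB. Qed.
Lemma adj_minusp X : adj (minusp X) = minusp X.
Proof. by rewrite minusp_def adjZr adjD adjK addrC. Qed.
Lemma adj_lie X Y : adj (lie X Y) = lie (adj Y) (adj X).
Proof. by rewrite /lie adjB !adjM. Qed.

Lemma lieDl X Y Z : lie (X + Y) Z = lie X Z + lie Y Z.
Proof. by rewrite /lie mulmxDl mulmxDr opprD addrACA. Qed.
Lemma lieDr X Y Z : lie X (Y + Z) = lie X Y + lie X Z.
Proof. by rewrite /lie mulmxDl mulmxDr opprD addrACA. Qed.
Lemma lieNl X Y : lie (- X) Y = - lie X Y.
Proof. by rewrite /lie mulNmx mulmxN opprB opprK addrC. Qed.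
Lemma lieNr X Y : lie X (- Y) = - lie X Y.
Proof. by rewrite /lie mulNmx mulmxN opprB opprK addrC. Qed.
Lemma lieBl X Y Z : lie (X - Y) Z = lie X Z - lie Y Z.
Proof. by rewrite lieDl lieNl. Qed.
Lemma lieBr X Y Z : lie X (Y - Z) = lie X Y - lie X Z.
Proof. by rewrite lieDr lieNr. Qed.
Lemma lie_anti X Y : lie X Y = - lie Y X.
Proof. by rewrite /lie opprB. Qed.
Lemma lieZl (c : R[i]) X Y : lie (c *: X) Y = c *: lie X Y.
Proof. by rewrite /lie scalerBr -scalemxAl -scalemxAr. Qed.
Lemma lie0l X : lie 0 X = 0.
Proof. by rewrite /lie mul0mx mulmx0 subrr. Qed.

End Alg.


Lemma coth_opp {R : realType} (x : R) : coth (- x) = - coth x.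
Proof. by rewrite /coth opprK addrC -opprB invrN mulrN. Qed.

Section AlgR.
Context {R : realType} {n : nat} (q : 'I_n -> R).
Implicit Types (A B C X Y Z : 'M[R[i]]_n).

Lemma cth a b : rc (coth (q b - q a)) = - rc (coth (q a - q b)).
Proof. by rewrite -opprB coth_opp rcN. Qed.

Lemma RqD X Y : Rq q (X + Y) = Rq q X + Rq q Y.
Proof. by apply/matrixP => a b; rewrite !mxE; case: eqP => _; rewrite ?addr0 ?mulrDl. Qed.
Lemma RqN X : Rq q (- X) = - Rq q X.
Proof. by apply/matrixP => a b; rewrite !mxE; case: eqP => _; rewrite ?oppr0 ?mulNr. Qed.
Lemma RqB X Y : Rq q (X - Y) = Rq q X - Rq q Y.
Proof. by rewrite RqD RqN. Qed.
Lemma RqZ (c : R[i]) X : Rq q (c *: X) = c *: Rq q X.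
Proof. by apply/matrixP => a b; rewrite !mxE; case: (a == b); rewrite ?mulr0 ?mulrA. Qed.
Lemma Rq0 : Rq q 0 = 0.
Proof. by apply/matrixP => a b; rewrite !mxE; case: (a == b); rewrite ?mul0r. Qed.
Lemma adj_Rq X : adj (Rq q X) = - Rq q (adj X).
Proof.
apply/matrixP => a b; rewrite !mxE eq_sym; case: eqP => _.
  by rewrite rmorph0 oppr0.
by rewrite conjcM' rc_conj cth mulrN.
Qed.
Lemma plusp_Rq X : plusp (Rq q X) = Rq q (minusp X).
Proof. by rewrite plusp_def minusp_def adj_Rq opprK RqZ RqD. Qed.

Lemma trRq X Y : \tr (Rq q X *m Y) = - \tr (X *m Rq q Y).
Proof.
rewrite /mxtrace -sumrN; apply: eq_bigr => a _.
rewrite !mxE -sumrN; apply: eq_bigr => b _; rewrite !mxE eq_sym.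
case: eqP => _; first by rewrite mul0r mulr0 oppr0.
by rewrite cth mulrN mulNr -mulrA [Y b a * _]mulrC.
Qed.
Lemma ip_Rq X Y : ip (Rq q X) Y = - ip X (Rq q Y).
Proof. by rewrite /ip trRq creN. Qed.

Lemma diag0_minusp Y : diag0 (minusp Y) = diagq (fun j => cre (Y j j)).
Proof.
apply/matrixP => a b; rewrite !mxE; case: eqP => [->|//].
by rewrite /cre rcE ReJ_add mulrC.
Qed.

End AlgR.


Section Core.
Context {R : realType} {n : nat}.
Implicit Types (A B D N P X Y Z J : 'M[R[i]]_n).

Lemma mmK X : minusp (minusp X) = minusp X.
Proof. exact/minusp_herm/adj_minusp. Qed.
Lemma ppK X : plusp (plusp X) = plusp X.
Proof. exact/plusp_anti/adj_plusp. Qed.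

Lemma adj_lie_pp X Y : adj (lie (plusp X) (plusp Y)) = - lie (plusp X) (plusp Y).
Proof. by rewrite adj_lie !adj_plusp lieNl lieNr opprK lie_anti. Qed.
Lemma adj_lie_pm X Y : adj (lie (plusp X) (minusp Y)) = lie (plusp X) (minusp Y).
Proof. by rewrite adj_lie adj_plusp adj_minusp lieNr -lie_anti. Qed.
Lemma adj_lie_mp X Y : adj (lie (minusp X) (plusp Y)) = lie (minusp X) (plusp Y).
Proof. by rewrite adj_lie adj_plusp adj_minusp lieNl -lie_anti. Qed.
Lemma adj_lie_mm X Y : adj (lie (minusp X) (minusp Y)) = - lie (minusp X) (minusp Y).
Proof. by rewrite adj_lie !adj_minusp lie_anti. Qed.

Definition T q N D Y J : R :=
  ip N (diag0 (minusp Y)) + ip D (lie (Rq q (minusp Y)) J)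
  + 2%:R^-1 * ip D (lie (adj Y) J).

Ltac abs q :=
  move: (@ipDr R n) (@ipBr R n) (@ipC R n) (@ip_lie R n) (@ip_ml R n)
        (@ip_pl R n) (@ipZr R n) (@ipNr R n) (@ip0l R n) (@ip_Rq R n q)
        (@lieDl R n) (@lieDr R n) (@lieBl R n) (@lieNl R n) (@lieZl R n)
        (@lie_anti R n) (@pluspD R n) (@minuspD R n) (@plusp_minusp R n)
        (@minusp_plusp R n) (@minusp_herm R n) (@minusp_anti R n)
        (@plusp_anti R n) adj_lie_pp adj_lie_pm
        adj_lie_mp adj_lie_mm (@plusp_def R n) mmK
        ppK (@adj0 R n) (@minusp_def R n) (@plusp0 R n)
        (@plusp_Rq R n q) (@Rq0 R n q) (@RqZ R n q) (@RqD R n q);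
  generalize (@ip R n) (@lie R n) (@plusp R n) (@minusp R n) (@adj R n)
    (@Rq R n q);
  move=> ip lie pl mi adj Rq ipDr ipBr ipC ip_lie ip_ml ip_pl ipZr ipNr ip0l
    ip_Rq lieDl lieDr lieBl lieNl lieZl lie_anti pluspD minuspD plusp_minusp
    minusp_plusp minusp_herm minusp_anti plusp_anti adj_lie_pp adj_lie_pm
    adj_lie_mp adj_lie_mm plusp_def mmK ppK adj0 minusp_def plusp0 plusp_Rq
    Rq0 RqZ RqD.

Lemma B1core q N D Y J : lie Y J = 0 ->
  ip N (diag0 (minusp Y)) - ip 0 (diag0 (minusp D))
  + ip (Rq q (plusp (lie D J))) (minusp Y)
  - ip (Rq q (plusp (lie Y J))) (minusp D)
  + ip (plusp J) (lie (minusp D) (minusp Y) - lie (plusp D) (plusp Y))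
  = T q N D Y J.
Proof.
rewrite /T; abs q; move=> hY.
have mixed : lie (mi Y) (pl J) = - lie (pl Y) (mi J).
  have H : mi (lie Y J) = 0 by rewrite hY minusp_def adj0 addr0 scaler0.
  rewrite -(plusp_minusp Y) -(plusp_minusp J) !lieDl !lieDr !minuspD in H.
  rewrite (minusp_anti _ (adj_lie_pp Y J)) (minusp_anti _ (adj_lie_mm Y J)) in H.
  rewrite (minusp_herm _ (adj_lie_pm Y J)) (minusp_herm _ (adj_lie_mp Y J)) in H.
  rewrite add0r addr0 in H.
  by move/eqP: H; rewrite addr_eq0 => /eqP ->; rewrite opprK.
have halfadj : rc 2%:R^-1 *: lie (adj Y) J = - lie (pl Y) J.
  have -> : lie (adj Y) J = lie (adj Y) J - lie Y J by rewrite hY subr0.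
  rewrite -lieBl -lieZl -lieNl; congr (lie _ J).
  by rewrite (plusp_def Y) -scalerN opprB.
have term5 : ip (pl J) (lie (mi D) (mi Y) - lie (pl D) (pl Y))
    = 2%:R^-1 * ip D (lie (adj Y) J).
  rewrite ipBr ipC [ip (pl J) _]ipC !ip_lie ip_ml ip_pl.
  rewrite (minusp_herm _ (adj_lie_mp Y J)) (plusp_anti _ (adj_lie_pp Y J)).
  rewrite -ipBr -ipZr halfadj mixed; congr (ip D _).
  by rewrite -[in RHS](plusp_minusp J) lieDr opprD addrC.
have term3 : ip (Rq (pl (lie D J))) (mi Y) = ip D (lie (Rq (mi Y)) J).
  by rewrite ip_Rq ip_pl plusp_Rq mmK ip_lie lie_anti ipNr opprK.
by rewrite hY plusp0 Rq0 !ip0l subr0 term3 term5 subr0.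
Qed.


Lemma diag0D X Y : diag0 (X + Y) = diag0 X + diag0 Y.
Proof. by apply/matrixP => a b; rewrite !mxE; case: (a == b); rewrite ?addr0. Qed.

Lemma B2core q N D P Y J : lie P J = 0 ->
  (2%:R)^-1 *
  (ip N (diag0 (minusp (Y + Y)))
   - ip 0 (diag0 (minusp (J *m D + D *m J)))
   + ip (Rq q (plusp (lie D J))) (minusp (Y + Y))
   - ip (Rq q (plusp (lie P J))) (minusp (J *m D + D *m J))
   + ip (minusp (J *m D)) (minusp Y) + ip (plusp (D *m J)) (plusp Y)
   - ip (minusp (D *m J)) (minusp Y) - ip (plusp (J *m D)) (plusp Y))
  = T q N D Y J.
Proof.
have k1 Z : ip (J *m D) Z = ip D (Z *m J).
  by rewrite /ip -mulmxA mxtrace_mulC mulmxA.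
have k2 Z : ip (D *m J) Z = ip D (J *m Z).
  by rewrite /ip mulmxA.
have lieE X Y' : lie X Y' = X *m Y' - Y' *m X by [].
move: k1 k2 (@diag0D) lieE; rewrite /T; abs q; move=> k1 k2 diag0D lieE hP.
have term3 : ip (Rq (pl (lie D J))) (mi Y) = ip D (lie (Rq (mi Y)) J).
  by rewrite ip_Rq ip_pl plusp_Rq mmK ip_lie lie_anti ipNr opprK.
have k3 : ip D (lie (adj Y) J) = ip (J *m D) (mi Y) - ip (J *m D) (pl Y)
   - (ip (D *m J) (mi Y) - ip (D *m J) (pl Y)).
  by rewrite -!ipBr minusp_plusp k1 k2 -ipBr lieE.
rewrite hP plusp0 Rq0 !ip0l subr0 minuspD diag0D !ipDr term3.
rewrite !ip_ml !ip_pl !mmK !ppK k3.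
lra.
Qed.

Lemma VFcore q N D Y J : lie Y J = 0 ->
  ip N (diag0 (minusp Y))
  + ip D ((2%:R)^-1 *: lie (Rq q (Y + adj Y) + (adj Y - Y)) J) = T q N D Y J.
Proof.
rewrite half_rc /T; abs q; move=> hY.
rewrite -addrA; congr (_ + _).
rewrite -lieZl scalerDr -RqZ -minusp_def lieDl ipDr; congr (_ + _).
by rewrite lieZl lieBl hY subr0 ipZr.
Qed.

End Core.

Lemma br1_core {R : realType} {n : nat} (f h : fn R n) q J Y :
  nabla1 h q J = 0 -> d2 h q J = Y -> lie Y J = 0 ->
  br1 f h q J = T q (nabla1 f q J) (d2 f q J) Y J.
Proof.
move=> h1 h2 hY; rewrite /br1; cbv zeta.
revert h1 h2; generalize (nabla1 h q J) (d2 h q J) (nabla1 f q J) (d2 f q J).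
move=> Nh Dh N D h1 h2; subst Nh Dh.
exact: B1core.
Qed.

Lemma br2_core {R : realType} {n : nat} (f h : fn R n) q J P Y :
  nabla1 h q J = 0 -> d2 h q J = P -> J *m P = Y -> P *m J = Y ->
  br2 f h q J = T q (nabla1 f q J) (d2 f q J) Y J.
Proof.
move=> h1 h2 e1 e2; rewrite /br2 /nabla2 /nabla2'; cbv zeta.
revert h1 h2; generalize (nabla1 h q J) (d2 h q J) (nabla1 f q J) (d2 f q J).
move=> Nh Dh N D h1 h2; subst Nh Dh.
have hP : lie P J = 0 by rewrite /lie e1 e2 subrr.
revert e1 e2; generalize (J *m P) (P *m J); move=> Y1 Y2 e1 e2; subst Y1 Y2.
exact: B2core.
Qed.

Lemma vf_core {R : realType} {n : nat} (f : fn R n) (EQ : vfq R n) (EJ : vfJ R n) q J Y :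
  lie Y J = 0 -> (forall j, EQ q J j = cre (Y j j)) ->
  EJ q J = (2%:R)^-1 *: lie (Rq q (Y + adj Y) + (adj Y - Y)) J ->
  vf_apply EQ EJ f q J = T q (nabla1 f q J) (d2 f q J) Y J.
Proof.
move=> hY hQ hJ; rewrite /vf_apply hJ.
have -> : diagq (EQ q J) = diag0 (minusp Y).
  by rewrite diag0_minusp; apply/matrixP => a b; rewrite !mxE hQ.
exact: VFcore.
Qed.


Lemma isd_ext {R : realType} (f g : R -> R) x df :
  (forall t, f t = g t) -> is_derive x (1:R) g df -> is_derive x 1 f df.
Proof. by move=> e; have -> : f = g by apply/funext. Qed.

Lemma isd_aff {R : realType} (a b x : R) : is_derive x 1 (fun t => a + t * b) b.
Proof.
have H := is_deriveD (is_derive_cst a x 1) (is_deriveZ b (is_derive_id x 1)).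
have -> : (fun t => a + t * b) = cst a + b \*: id.
  by apply/funext => t /=; rewrite mulrC.
apply: is_derive_eq H _.
by rewrite add0r /GRing.scale /= mulr1.
Qed.

Lemma cimD {R : realType} (a b : R[i]) : cim (a + b) = cim a + cim b.
Proof. by case: a; case: b. Qed.
Lemma cimZ {R : realType} (r : R) (a : R[i]) : cim (rc r * a) = r * cim a.
Proof. by case: a => x y; rewrite /cim /rc /= mul0r addr0. Qed.
Lemma cim_sum {R : realType} (I : finType) (F : I -> R[i]) :
  cim (\sum_(i : I) F i) = \sum_(i : I) cim (F i).
Proof.
elim/big_rec2: _ => [|i x y _ <-]; first by []. by rewrite cimD.
Qed.
Lemma creM {R : realType} (a b : R[i]) : cre (a * b) = cre a * cre b - cim a * cim b.
Proof. by case: a; case: b. Qed.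
Lemma cimM {R : realType} (a b : R[i]) : cim (a * b) = cre a * cim b + cim a * cre b.
Proof. by case: a => ? ?; case: b => ? ? /=; rewrite /cim /cre /= addrC. Qed.

Lemma isd_cst {R : realType} (c x d : R) : d = 0 -> is_derive x 1 (fun _ => c) d.
Proof. by move=> ->; exact: is_derive_cst. Qed.

Definition MD {R : realType} {n : nat} (F : R -> 'M[R[i]]_n) (D : 'M[R[i]]_n) :=
  forall a b, is_derive (0:R) 1 (fun t => cre (F t a b)) (cre (D a b)) /\
              is_derive (0:R) 1 (fun t => cim (F t a b)) (cim (D a b)).

Lemma MD_const {R : realType} {n : nat} (M : 'M[R[i]]_n) : MD (fun _ => M) 0.
Proof. by move=> a b; split; apply: isd_cst; rewrite mxE. Qed.

Lemma MD_lin {R : realType} {n : nat} (J X : 'M[R[i]]_n) :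
  MD (fun t => J + rc t *: X) X.
Proof.
move=> a b; split.
  apply: isd_ext (isd_aff (cre (J a b)) (cre (X a b)) 0) => t.
  by rewrite !mxE creD creZ.
apply: isd_ext (isd_aff (cim (J a b)) (cim (X a b)) 0) => t.
by rewrite !mxE cimD cimZ.
Qed.

Lemma MD_mul {R : realType} {n : nat} (F G : R -> 'M[R[i]]_n) DF DG :
  MD F DF -> MD G DG -> MD (fun t => F t *m G t) (DF *m G 0 + F 0 *m DG).
Proof.
move=> hF hG a b.
pose fr c := fun t : R => cre (F t a c).
pose fi c := fun t : R => cim (F t a c).
pose gr c := fun t : R => cre (G t c b).
pose gi c := fun t : R => cim (G t c b).
have hr : forall c : 'I_n, is_derive (0:R) 1 (fr c * gr c - fi c * gi c)
   (fr c 0 *: cre (DG c b) + gr c 0 *: cre (DF a c)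
    - (fi c 0 *: cim (DG c b) + gi c 0 *: cim (DF a c))).
  move=> c; apply: is_deriveB; apply: is_deriveM;
    [exact: (hF a c).1 | exact: (hG c b).1 | exact: (hF a c).2 | exact: (hG c b).2].
have hi : forall c : 'I_n, is_derive (0:R) 1 (fr c * gi c + fi c * gr c)
   (fr c 0 *: cim (DG c b) + gi c 0 *: cre (DF a c)
    + (fi c 0 *: cre (DG c b) + gr c 0 *: cim (DF a c))).
  move=> c; apply: is_deriveD; apply: is_deriveM;
    [exact: (hF a c).1 | exact: (hG c b).2 | exact: (hF a c).2 | exact: (hG c b).1].
have Hr := is_derive_sum hr; have Hi := is_derive_sum hi.
rewrite fct_sumE in Hr; rewrite fct_sumE in Hi.
split.
  apply: isd_ext (is_derive_eq Hr _) => [t|].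
    rewrite !mxE cre_sum; apply: eq_bigr => c _; by rewrite creM.
  have -> : (DF *m G 0 + F 0 *m DG) a b = (DF *m G 0) a b + (F 0 *m DG) a b.
    by rewrite mxE.
  rewrite creD !mxE !cre_sum -big_split; apply: eq_bigr => c _ /=.
  rewrite !creM /fr /fi /gr /gi /GRing.scale /=; ring.
apply: isd_ext (is_derive_eq Hi _) => [t|].
  rewrite !mxE cim_sum; apply: eq_bigr => c _; by rewrite cimM.
have -> : (DF *m G 0 + F 0 *m DG) a b = (DF *m G 0) a b + (F 0 *m DG) a b.
  by rewrite mxE.
rewrite cimD !mxE !cim_sum.
transitivity (\sum_(c < n) (cim (DF a c * G 0 c b) + cim (F 0 a c * DG c b))); last first.
  by rewrite big_split.
apply: eq_bigr => c _ /=.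
rewrite !cimM /fr /fi /gr /gi /GRing.scale /=; ring.
Qed.

Lemma MD_ext {R : realType} {n : nat} (F G : R -> 'M[R[i]]_n) D D' :
  MD F D -> (forall t, G t = F t) -> D = D' -> MD G D'.
Proof. by move=> h e <-; have -> : G = F by apply/funext. Qed.

Arguments MD_ext {R n F G D D'}.
Arguments MD_mul {R n F G DF DG}.

Lemma mulE {R : realType} {n : nat} (A B : 'M[R[i]]_n) : A * B = A *m B.
Proof. by rewrite mulmxE. Qed.

Fixpoint Dk {R : realType} {n : nat} (J X : 'M[R[i]]_n) (k : nat) : 'M[R[i]]_n :=
  match k with 0 => 0 | k'.+1 => Dk J X k' *m J + J ^+ k' *m X end.

Lemma MD_pow {R : realType} {n : nat} (J X : 'M[R[i]]_n) k :
  MD (fun t => (J + rc t *: X) ^+ k) (Dk J X k).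
Proof.
elim: k => [|k IH].
  by refine (MD_ext (MD_const 1) _ _).
refine (MD_ext (MD_mul IH (MD_lin J X)) _ _) => [t|].
  by rewrite exprSr mulE.
have -> : rc (0 : R) = 0 by rewrite rcE rmorph0.
by rewrite scale0r addr0 /=.
Qed.

Lemma MD_tr {R : realType} {n : nat} (F : R -> 'M[R[i]]_n) D : MD F D ->
  is_derive (0:R) 1 (fun t => cre (\tr (F t))) (cre (\tr D)) /\
  is_derive (0:R) 1 (fun t => cim (\tr (F t))) (cim (\tr D)).
Proof.
move=> h; split.
  have H := is_derive_sum (fun a => (h a a).1); rewrite fct_sumE in H.
  apply: isd_ext (is_derive_eq H _) => [t|].
    by rewrite /mxtrace cre_sum.
  by rewrite /mxtrace cre_sum.
have H := is_derive_sum (fun a => (h a a).2); rewrite fct_sumE in H.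
apply: isd_ext (is_derive_eq H _) => [t|].
  by rewrite /mxtrace cim_sum.
by rewrite /mxtrace cim_sum.
Qed.

Lemma commX {R : realType} {n : nat} (J Z : 'M[R[i]]_n) k :
  J *m Z = Z *m J -> Z *m J ^+ k = J ^+ k *m Z.
Proof.
move=> h; elim: k => [|k IH]; first by rewrite expr0 -mulE mulr1 -mulE mul1r.
by rewrite exprS mulE mulmxA -h -mulmxA IH mulmxA.
Qed.

Lemma trDk {R : realType} {n : nat} (J X : 'M[R[i]]_n) k : forall Z,
  J *m Z = Z *m J ->
  \tr (Dk J X k.+1 *m Z) = k.+1%:R * \tr (J ^+ k *m X *m Z).
Proof.
elim: k => [|k IH] Z hZ.
  by rewrite /= mul0mx add0r mul1r.
rewrite [Dk J X k.+2]/= mulmxDl mxtraceD -mulmxA IH; last first.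
  by rewrite -mulmxA -hZ !mulmxA.
have -> : \tr (J ^+ k *m X *m (J *m Z)) = \tr (J ^+ k.+1 *m X *m Z).
  have hm : J *m J ^+ k = J ^+ k.+1 by rewrite exprS mulE.
  rewrite -[in LHS]mulmxA [in LHS]mxtrace_mulC -[in LHS]mulmxA hZ.
  rewrite -[in LHS]mulmxA hm [in LHS]mulmxA [in LHS]mxtrace_mulC.
  by rewrite [in LHS]mulmxA.
by rewrite [k.+2%:R](mulrSr 1 k.+1) mulrDl mul1r.
Qed.


Arguments MD_tr {R n F D}.

Lemma derive1_of {R : realType} (f : R -> R) (d : R) : is_derive (0:R) (1:R) f d -> derive1 f 0 = d.
Proof. by move=> h; rewrite derive1E derive_val. Qed.

Lemma tr_delta {R : realType} {n : nat} (P : 'M[R[i]]_n) a b :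
  \tr (P *m delta_mx b a) = P a b.
Proof.
rewrite /mxtrace (bigD1 a) //= big1 ?addr0 => [|i ia].
  rewrite !mxE (bigD1 b) //= big1 ?addr0 => [|j jb].
    by rewrite mxE !eqxx mulr1.
  by rewrite mxE (negbTE jb) mulr0.
rewrite mxE big1 // => j _; rewrite mxE.
have -> : (i == a) = false by apply/negbTE.
by rewrite andbF mulr0.
Qed.

Lemma cre_ci {R : realType} (z : R[i]) : cre (ci * z) = - cim z.
Proof. by case: z => x y; rewrite /cre /ci /cim /= mul0r mul1r sub0r. Qed.
Lemma cre_mci {R : realType} (z : R[i]) : cre (- ci * z) = cim z.
Proof. by rewrite mulNr creN cre_ci opprK. Qed.

Lemma recomb {R : realType} (z : R[i]) : rc (cre z) - ci * rc (- cim z) = z.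
Proof.
case: z => x y; rewrite /rc /ci /cre /cim /=; apply/eqP; rewrite eq_complex /=.
by apply/andP; split; apply/eqP; ring.
Qed.

Lemma d2_of {R : realType} {n : nat} (h : fn R n) q J (P : 'M[R[i]]_n) :
  (forall X, dir2 h q J X = ip P X) -> d2 h q J = P.
Proof.
move=> H; apply/matrixP => a b; rewrite mxE !H /ip -scalemxAr mxtraceZ !tr_delta.
by rewrite cre_ci recomb.
Qed.

Lemma nabla1_const {R : realType} {n : nat} (h : fn R n) q J :
  (forall q q' J, h q J = h q' J) -> nabla1 h q J = 0.
Proof.
move=> H; apply/matrixP => a b; rewrite !mxE; case: (a == b) => //.
rewrite /dirD (_ : derive1 _ 0 = 0) ?rcE ?rmorph0 //.
apply: derive1_of; apply: (isd_ext _ (fun _ => h q J) 0 0).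
  by move=> t; rewrite /line /= scaler0 addr0 (H _ q).
Qed.

Lemma dir2_hk {R : realType} {n : nat} (m : nat) q (J X : 'M[R[i]]_n) :
  dir2 (hk m.+1) q J X = ip (J ^+ m) X.
Proof.
rewrite /dir2 /dirD; apply: derive1_of.
have H := is_deriveZ (m.+1%:R^-1) (MD_tr (MD_pow J X m.+1)).1.
apply: isd_ext (is_derive_eq H _) => [t|] //.
have E : cre (\tr (Dk J X m.+1)) = m.+1%:R * ip (J ^+ m) X.
  rewrite -(mulmx1 (Dk J X m.+1)) trDk; last by rewrite mulmx1 mul1mx.
  by rewrite /ip mulmx1 -rc_nat creZ.
change (m.+1%:R^-1 * cre (\tr (Dk J X m.+1)) = ip (J ^+ m) X).
by rewrite E mulrA mulVf ?mul1r // pnatr_eq0.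
Qed.

Lemma dir2_htk {R : realType} {n : nat} (m : nat) q (J X : 'M[R[i]]_n) :
  dir2 (htk m.+1) q J X = ip (- ci *: J ^+ m) X.
Proof.
rewrite /dir2 /dirD; apply: derive1_of.
have H := is_deriveZ (m.+1%:R^-1) (MD_tr (MD_pow J X m.+1)).2.
apply: isd_ext (is_derive_eq H _) => [t|] //.
have E : cim (\tr (Dk J X m.+1)) = m.+1%:R * ip (- ci *: J ^+ m) X.
  rewrite -(mulmx1 (Dk J X m.+1)) trDk; last by rewrite mulmx1 mul1mx.
  by rewrite /ip mulmx1 -rc_nat cimZ -scalemxAl mxtraceZ cre_mci.
change (m.+1%:R^-1 * cim (\tr (Dk J X m.+1)) = ip (- ci *: J ^+ m) X).
by rewrite E mulrA mulVf ?mul1r // pnatr_eq0.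
Qed.


Definition aff {R : realType} {n : nat} (a x y : 'I_n) (c0 c1 : R) (z : R[i]) : fn R n :=
  fun q J => c0 + c1 * q a + cre (z * J x y).

Lemma isd_line_aff {R : realType} {n : nat} (a x y : 'I_n) c0 c1 z q J
   (v : ('I_n -> R) * 'M[R[i]]_n) :
  is_derive (0:R) 1 (line (aff a x y c0 c1 z) q J v) (c1 * v.1 a + cre (z * v.2 x y)).
Proof.
apply: isd_ext (isd_aff (aff a x y c0 c1 z q J) _ 0) => t.
rewrite /line /aff !mxE !mulrDr creD [z * (_ * _)]mulrCA creZ; ring.
Qed.

Lemma dirD_aff {R : realType} {n : nat} (a x y : 'I_n) (c0 c1 : R) (z : R[i]) q J (v : ('I_n -> R) * 'M[R[i]]_n) :
  dirD v (aff a x y c0 c1 z) q J = c1 * v.1 a + cre (z * v.2 x y).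
Proof. by apply: derive1_of; apply: isd_line_aff. Qed.

Lemma iterD_aff {R : realType} {n : nat} (a x y : 'I_n) (vs : seq (('I_n -> R) * 'M[R[i]]_n)) :
  forall (c0 c1 : R) (z : R[i]), exists (c0' c1' : R) (z' : R[i]),
    Defs.iterD vs (aff a x y c0 c1 z) = aff a x y c0' c1' z'.
Proof.
elim: vs => [|v vs IH] c0 c1 z; first by exists c0, c1, z.
have [c0' [c1' [z' e]]] := IH c0 c1 z.
exists (c1' * v.1 a + cre (z' * v.2 x y)), 0, 0.
apply/funext => q; apply/funext => J /=.
by rewrite e dirD_aff /aff !mul0r addr0 /cre /= addr0.
Qed.

Lemma norm_re_im {R : realType} (w : R[i]) (d : R) :
  `|w| < rc d -> `|cre w| < d /\ `|cim w| < d.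
Proof.
rewrite normc_def /rc ltcE /= => /andP [_ h].
have s0 : 0 <= cre w ^+ 2 + cim w ^+ 2 by rewrite addr_ge0 ?sqr_ge0.
split; apply: le_lt_trans h; rewrite -sqrtr_sqr ler_sqrt //.
  by rewrite lerDl sqr_ge0.
by rewrite lerDr sqr_ge0.
Qed.

Arguments norm_re_im {R w d}.

Lemma cont_aff {R : realType} {n : nat} (a x y : 'I_n) (c0 c1 : R) (z : R[i]) (q : 'I_n -> R) (J : 'M[R[i]]_n) :
  cont_at (aff a x y c0 c1 z) q J.
Proof.
move=> e e0.
set K := `|c1| + `|cre z| + `|cim z|.
have K0 : 0 <= K by rewrite /K !addr_ge0.
exists (e / (K + 1)); first by rewrite divr_gt0 // ltr_wpDl.
move=> q' J' hq hJ.
have [hr hi] := norm_re_im (hJ x y).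
have hq' := hq a.
set d := e / (K + 1) in hr hi hq'.
have -> : aff a x y c0 c1 z q' J' - aff a x y c0 c1 z q J =
   c1 * (q' a - q a) + (cre z * cre (J' x y - J x y) - cim z * cim (J' x y - J x y)).
  rewrite /aff -creM mulrBr mulrBr creB; ring.
apply: (le_lt_trans (y := K * d)).
  apply: le_trans (ler_normD _ _) _.
  apply: le_trans (lerD (lexx _) (ler_normB _ _)) _.
  rewrite !normrM /K !mulrDl addrA.
  by rewrite !lerD // ler_wpM2l // ltW.
rewrite /d mulrA ltr_pdivrMr ?ltr_wpDl // mulrC ltr_pM2l //.
by rewrite ltrDl.
Qed.

Lemma smooth_aff {R : realType} {n : nat} (a x y : 'I_n) (c0 c1 : R) z :
  smooth (aff a x y c0 c1 z).
Proof.
move=> vs q J _; have [c0' [c1' [z' ->]]] := @iterD_aff R n a x y vs c0 c1 z.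
split; first exact: cont_aff.
by move=> v; have H := isd_line_aff a x y c0' c1' z' q J v; exact: ex_derive.
Qed.


Lemma ip_delta {R : realType} {n : nat} (z : R[i]) (x y : 'I_n) (M : 'M[R[i]]_n) :
  ip (z *: delta_mx y x) M = cre (z * M x y).
Proof. by rewrite /ip -scalemxAl mxtraceZ mxtrace_mulC tr_delta. Qed.

Lemma nabla1_aff {R : realType} {n : nat} (a x y : 'I_n) (c0 c1 : R) (z : R[i]) q J :
  nabla1 (aff a x y c0 c1 z) q J = diagq (fun j => c1 * (a == j)%:R).
Proof.
apply/matrixP => u v; rewrite !mxE; case: (u == v) => //.
by rewrite dirD_aff /= mxE mulr0 addr0.
Qed.

Lemma d2_aff {R : realType} {n : nat} (a x y : 'I_n) (c0 c1 : R) (z : R[i]) q J :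
  d2 (aff a x y c0 c1 z) q J = z *: delta_mx y x.
Proof.
apply: d2_of => X; rewrite /dir2 dirD_aff /= ip_delta.
by rewrite mulr0 add0r.
Qed.

Lemma ip_diagq {R : realType} {n : nat} (u w : 'I_n -> R) :
  ip (diagq u) (diagq w) = \sum_j u j * w j.
Proof.
rewrite /ip /mxtrace cre_sum; apply: eq_bigr => j _.
rewrite mxE (bigD1 j) //= big1 ?addr0 => [|k kj].
  by rewrite !mxE eqxx -rcM.
rewrite !mxE; have -> : (j == k) = false by apply/negbTE; rewrite eq_sym.
by rewrite mul0r.
Qed.

Lemma vf_aff {R : realType} {n : nat} (EQ : vfq R n) (EJ : vfJ R n) (a x y : 'I_n)
  (c1 : R) (z : R[i]) q J :
  vf_apply EQ EJ (aff a x y 0 c1 z) q J = c1 * EQ q J a + cre (z * EJ q J x y).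
Proof.
rewrite /vf_apply nabla1_aff d2_aff ip_diagq ip_delta; congr (_ + _).
rewrite (bigD1 a) //= big1 ?addr0 => [|j ja]; first by rewrite eqxx mulr1.
have -> : (a == j) = false by apply/negbTE; rewrite eq_sym.
by rewrite mulr0 mul0r.
Qed.

Lemma complex_ext {R : realType} (u v : R[i]) : cre u = cre v -> cim u = cim v -> u = v.
Proof. by case: u => ? ?; case: v => ? ? /= -> ->. Qed.

Lemma vf_unique {R : realType} {n : nat} (EQ FQ : vfq R n) (EJ FJ : vfJ R n) q J :
  (forall f, smooth f -> vf_apply EQ EJ f q J = vf_apply FQ FJ f q J) ->
  (forall j, EQ q J j = FQ q J j) /\ EJ q J = FJ q J.
Proof.
move=> H; split.
  move=> j; have := H _ (smooth_aff j j j 0 1 0).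
  by rewrite !vf_aff !mul0r /cre /= !addr0 !mul1r.
apply/matrixP => x y.
have h1 := H _ (smooth_aff x x y 0 0 1).
have h2 := H _ (smooth_aff x x y 0 0 ci).
rewrite !vf_aff !mul0r !add0r !mul1r in h1.
rewrite !vf_aff !mul0r !add0r !cre_ci in h2.
apply: complex_ext => //.
by apply: oppr_inj.
Qed.


Definition FJf {R : realType} {n : nat} (q : 'I_n -> R) (Y J : 'M[R[i]]_n) :=
  (2%:R)^-1 *: lie (Rq q (Y + adj Y) + (adj Y - Y)) J.

Lemma ham_iff {R : realType} {n : nat}
  (br : fn R n -> fn R n -> ('I_n -> R) -> 'M[R[i]]_n -> R) (h : fn R n)
  (FQ : vfq R n) (FJ : vfJ R n) (Yf : ('I_n -> R) -> 'M[R[i]]_n -> 'M[R[i]]_n) :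
  (forall q J, lie (Yf q J) J = 0) ->
  (forall f q J, reg q -> br f h q J = T q (nabla1 f q J) (d2 f q J) (Yf q J) J) ->
  (forall q J j, FQ q J j = cre (Yf q J j j)) ->
  (forall q J, FJ q J = FJf q (Yf q J) J) ->
  forall EQ EJ, IsHam br h EQ EJ <-> agree EQ EJ FQ FJ.
Proof.
move=> hY hbr hFQ hFJ EQ EJ; split.
  move=> H q J rq; apply: vf_unique => f sf.
  rewrite (H f sf q J rq) hbr //; symmetry.
  exact: (vf_core f FQ FJ q J (Yf q J) (hY q J) (hFQ q J) (hFJ q J)).
move=> Ag f sf q J rq; have [h1 h2] := Ag q J rq.
rewrite hbr //; apply: vf_core => //.
  by move=> j; rewrite h1 hFQ.
by rewrite h2 hFJ.
Qed.

Lemma lie_pow {R : realType} {n : nat} (J : 'M[R[i]]_n) k : lie (J ^+ k) J = 0.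
Proof. by rewrite /lie -!mulE -exprSr -exprS subrr. Qed.

Lemma lie_cpow {R : realType} {n : nat} (c : R[i]) (J : 'M[R[i]]_n) k :
  lie (c *: J ^+ k) J = 0.
Proof. by rewrite lieZl lie_pow scaler0. Qed.

Lemma nabla1_hk {R : realType} {n : nat} k q (J : 'M[R[i]]_n) : nabla1 (hk k) q J = 0.
Proof. exact: nabla1_const. Qed.
Lemma nabla1_htk {R : realType} {n : nat} k q (J : 'M[R[i]]_n) : nabla1 (htk k) q J = 0.
Proof. exact: nabla1_const. Qed.

Lemma d2_hk {R : realType} {n : nat} m q (J : 'M[R[i]]_n) : d2 (hk m.+1) q J = J ^+ m.
Proof. by apply: d2_of => X; rewrite dir2_hk. Qed.
Lemma d2_htk {R : realType} {n : nat} m q (J : 'M[R[i]]_n) :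
  d2 (htk m.+1) q J = - ci *: J ^+ m.
Proof. by apply: d2_of => X; rewrite dir2_htk. Qed.

Lemma adjci {R : realType} {n : nat} (X : 'M[R[i]]_n) : adj (- ci *: X) = ci *: adj X.
Proof. by rewrite adjZ; congr (_ *: _); rewrite /ci /conjc /= oppr0 opprK. Qed.

Lemma tFJ_form {R : realType} {n : nat} q (X J : 'M[R[i]]_n) :
  (2%:R)^-1 *: lie (ci *: Rq q (adj X - X) + ci *: (X + adj X)) J
  = FJf q (- ci *: X) J.
Proof.
rewrite /FJf adjci; congr (_ *: lie _ J); congr (_ + _).
  by rewrite -RqZ; congr (Rq q _); rewrite scalerBr scaleNr addrC.
by rewrite scaleNr opprK scalerDr addrC.
Qed.

Lemma br2_hk {R : realType} {n : nat} m f q (J : 'M[R[i]]_n) :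
  br2 f (hk m.+1) q J = T q (nabla1 f q J) (d2 f q J) (J ^+ m.+1) J.
Proof.
apply: br2_core; [exact: nabla1_hk | exact: d2_hk | | ].
  by rewrite -mulE -exprS.
by rewrite -mulE -exprSr.
Qed.

Lemma br1_hk {R : realType} {n : nat} m f q (J : 'M[R[i]]_n) :
  br1 f (hk m.+2) q J = T q (nabla1 f q J) (d2 f q J) (J ^+ m.+1) J.
Proof. apply: br1_core; [exact: nabla1_hk | exact: d2_hk | exact: lie_pow]. Qed.

Lemma br2_htk {R : realType} {n : nat} m f q (J : 'M[R[i]]_n) :
  br2 f (htk m.+1) q J = T q (nabla1 f q J) (d2 f q J) (- ci *: J ^+ m.+1) J.
Proof.
apply: br2_core; [exact: nabla1_htk | exact: d2_htk | | ].
  by rewrite -scalemxAr -mulE -exprS.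
by rewrite -scalemxAl -mulE -exprSr.
Qed.

Lemma br1_htk {R : realType} {n : nat} m f q (J : 'M[R[i]]_n) :
  br1 f (htk m.+2) q J = T q (nabla1 f q J) (d2 f q J) (- ci *: J ^+ m.+1) J.
Proof. apply: br1_core; [exact: nabla1_htk | exact: d2_htk | exact: lie_cpow]. Qed.


Section N.
Context {R : realType} {n : nat}.
Implicit Types (J X Y : 'M[R[i]]_n).

Lemma adj1 : adj (1 : 'M[R[i]]_n) = 1.
Proof.
apply/matrixP => a b; rewrite !mxE eq_sym.
exact: conjc_nat.
Qed.

Lemma adj_exp J k : adj (J ^+ k) = (adj J) ^+ k.
Proof.
elim: k => [|k IH]; first by rewrite !expr0 adj1.
by rewrite exprSr mulE adjM IH -mulE -exprS.
Qed.

Lemma plusp0_herm X : plusp X = 0 -> adj X = X.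
Proof.
move=> h; have e1 := plusp_minusp X; have e2 := minusp_plusp X.
by rewrite h add0r in e1; rewrite h subr0 e1 in e2.
Qed.
Lemma minusp0_anti X : minusp X = 0 -> adj X = - X.
Proof.
move=> h; have e1 := plusp_minusp X; have e2 := minusp_plusp X.
by rewrite h addr0 in e1; rewrite h sub0r e1 in e2.
Qed.

Lemma herm_pow J k : adj J = J -> adj (J ^+ k) = J ^+ k.
Proof. by move=> h; rewrite adj_exp h. Qed.

Lemma anti_pow J k : adj J = - J -> adj (J ^+ k) = (-1) ^+ k *: J ^+ k.
Proof.
move=> h; rewrite adj_exp h; elim: k => [|k IH]; first by rewrite !expr0 scale1r.
rewrite exprS mulE IH -scalemxAr mulNmx -mulE -exprS scalerN.
by rewrite [(-1) ^+ k.+1]exprS mulN1r scaleNr.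
Qed.

Lemma anti_pow_even J k : adj J = - J -> ~~ odd k -> adj (J ^+ k) = J ^+ k.
Proof. by move=> h o; rewrite anti_pow // -signr_odd (negbTE o) expr0 scale1r. Qed.
Lemma anti_pow_odd J k : adj J = - J -> odd k -> adj (J ^+ k) = - J ^+ k.
Proof. by move=> h o; rewrite anti_pow // -signr_odd o expr1 scaleN1r. Qed.

Lemma FJ_herm q Y J : adj Y = Y -> FJf q Y J = lie (Rq q Y) J.
Proof.
move=> h; rewrite /FJf h subrr addr0 half_rc -lieZl -RqZ.
by rewrite (half2 Y).
Qed.

Lemma FJ_anti q Y J : adj Y = - Y -> lie Y J = 0 -> FJf q Y J = 0.
Proof.
move=> h l; rewrite /FJf h subrr Rq0 add0r lieBl lieNl l oppr0 addr0.
by rewrite scaler0.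
Qed.

Lemma tFJ_herm q X J : adj X = X -> lie X J = 0 -> FJf q (- ci *: X) J = 0.
Proof.
move=> h l; apply: FJ_anti; last by rewrite lieZl l scaler0.
by rewrite adjci h scaleNr opprK.
Qed.

Lemma tFJ_anti q X J : adj X = - X -> FJf q (- ci *: X) J = lie (- ci *: Rq q X) J.
Proof.
move=> h; rewrite FJ_herm ?RqZ //.
by rewrite adjci h scalerN scaleNr.
Qed.

Lemma herm_res q Y J : adj J = J -> adj Y = Y -> adj (lie (Rq q Y) J) = lie (Rq q Y) J.
Proof.
move=> hJ hY; rewrite adj_lie adj_Rq hY hJ lieNr.
by rewrite -lie_anti.
Qed.

Lemma anti_res_even q Y J : adj J = - J -> adj Y = Y ->
  adj (lie (Rq q Y) J) = - lie (Rq q Y) J.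
Proof.
move=> hJ hY; rewrite adj_lie adj_Rq hY hJ lieNr lieNl opprK.
by rewrite lie_anti.
Qed.

Lemma anti_res_odd q Y J : adj J = - J -> adj Y = - Y ->
  adj (lie (- ci *: Rq q Y) J) = - lie (- ci *: Rq q Y) J.
Proof.
move=> hJ hY; rewrite adj_lie adjci adj_Rq hY RqN opprK hJ.
have -> : ci *: Rq q Y = - (- ci *: Rq q Y) by rewrite scaleNr opprK.
by rewrite lieNr lieNl opprK lie_anti.
Qed.

Lemma conj_real (z : R[i]) : conjc z = z -> rc (cre z) = z /\ cim z = 0.
Proof.
case: z => x y /eqP; rewrite eq_complex /= => /andP [_ /eqP e].
rewrite /rc /cre /cim /=.
have y0 : y = 0 by lra.
by rewrite y0.
Qed.

Lemma conj_anti (z : R[i]) : conjc z = - z -> cre z = 0.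
Proof.
case: z => x y /eqP; rewrite eq_complex /= => /andP [/eqP e _].
rewrite /cre /=; lra.
Qed.

Lemma herm_diag Y j : adj Y = Y -> rc (cre (Y j j)) = Y j j /\ cim (Y j j) = 0.
Proof. by move=> h; apply: conj_real; rewrite -[in RHS]h mxE. Qed.

Lemma anti_diag Y j : adj Y = - Y -> cre (Y j j) = 0.
Proof.
move=> h; apply: conj_anti.
by move/(congr1 (fun M : 'M[R[i]]_n => M j j)): h; rewrite /= !mxE.
Qed.
End N.


Arguments plusp0_herm {R n X}.
Arguments minusp0_anti {R n X}.
Arguments herm_pow {R n J} k.
Arguments anti_pow_even {R n J k}.
Arguments anti_pow_odd {R n J k}.

Section P.
Context {R : realType} {n : nat}.

Definition FQk k : vfq R n := fun q J j => cre ((J ^+ k) j j).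
Definition FJk k : vfJ R n := fun q J =>
  (2%:R)^-1 *: lie (Rq q (J ^+ k + adj (J ^+ k)) + (adj (J ^+ k) - J ^+ k)) J.
Definition tFQk k : vfq R n := fun q J j => cre ((- ci *: J ^+ k) j j).
Definition tFJk k : vfJ R n := fun q J =>
  (2%:R)^-1 *: lie (ci *: Rq q (adj (J ^+ k) - J ^+ k) + ci *: (J ^+ k + adj (J ^+ k))) J.

Lemma P1 m :
    (forall EQ EJ, IsHam2 (hk m.+1) EQ EJ <-> agree EQ EJ (FQk m.+1) (FJk m.+1)) /\
    (forall EQ EJ, IsHam1 (hk m.+2) EQ EJ <-> agree EQ EJ (FQk m.+1) (FJk m.+1)) /\
    (forall EQ EJ, IsHam2 (htk m.+1) EQ EJ <-> agree EQ EJ (tFQk m.+1) (tFJk m.+1)) /\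
    (forall EQ EJ, IsHam1 (htk m.+2) EQ EJ <-> agree EQ EJ (tFQk m.+1) (tFJk m.+1)).
Proof.
split; [|split; [|split]].
- apply: (ham_iff _ _ _ _ (fun q J => J ^+ m.+1)).
  + by move=> q J; apply: lie_pow.
  + by move=> f q J _; apply: br2_hk.
  + by move=> q J j.
  + by move=> q J.
- apply: (ham_iff _ _ _ _ (fun q J => J ^+ m.+1)).
  + by move=> q J; apply: lie_pow.
  + by move=> f q J _; apply: br1_hk.
  + by move=> q J j.
  + by move=> q J.
- apply: (ham_iff _ _ _ _ (fun q J => - ci *: J ^+ m.+1)).
  + by move=> q J; apply: lie_cpow.
  + by move=> f q J _; apply: br2_htk.
  + by move=> q J j.
  + by move=> q J; apply: tFJ_form.
- apply: (ham_iff _ _ _ _ (fun q J => - ci *: J ^+ m.+1)).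
  + by move=> q J; apply: lie_cpow.
  + by move=> f q J _; apply: br1_htk.
  + by move=> q J j.
  + by move=> q J; apply: tFJ_form.
Qed.

Lemma agree_h k (EQ : vfq R n) EJ : (0 < k)%N ->
  IsHam2 (hk k) EQ EJ \/ IsHam1 (hk k.+1) EQ EJ ->
  forall q J, reg q -> (forall j, EQ q J j = cre ((J ^+ k) j j)) /\
     EJ q J = FJf q (J ^+ k) J.
Proof.
case: k => // m _ H q J rq.
have [A1 [A2 _]] := P1 m.
have Ag : agree EQ EJ (FQk m.+1) (FJk m.+1).
  by case: H => H; [apply/A1 | apply/A2].
exact: Ag q J rq.
Qed.

Lemma agree_t k (EQ : vfq R n) EJ : (0 < k)%N ->
  IsHam2 (htk k) EQ EJ \/ IsHam1 (htk k.+1) EQ EJ ->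
  forall q J, reg q -> (forall j, EQ q J j = cre ((- ci *: J ^+ k) j j)) /\
     EJ q J = FJf q (- ci *: J ^+ k) J.
Proof.
case: k => // m _ H q J rq.
have [_ [_ [A3 A4]]] := P1 m.
have Ag : agree EQ EJ (tFQk m.+1) (tFJk m.+1).
  by case: H => H; [apply/A3 | apply/A4].
have [h1 h2] := Ag q J rq; split => //.
by rewrite h2 /tFJk tFJ_form.
Qed.

Lemma minusp0 : minusp (0 : 'M[R[i]]_n) = 0.
Proof. by rewrite minusp_def adj0 addr0 scaler0. Qed.

Lemma pl_eq (J : 'M[R[i]]_n) : minusp J = 0 -> plusp J = J.
Proof. by move=> h; rewrite -{2}(plusp_minusp J) h addr0. Qed.
Lemma mi_eq (J : 'M[R[i]]_n) : plusp J = 0 -> minusp J = J.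
Proof. by move=> h; rewrite -{2}(plusp_minusp J) h add0r. Qed.

Lemma tang_h q (J : 'M[R[i]]_n) k :
  (plusp J = 0 -> plusp (FJf q (J ^+ k) J) = 0) /\
  (minusp J = 0 -> minusp (FJf q (J ^+ k) J) = 0).
Proof.
split => h.
  have hJ := plusp0_herm h; have hY := herm_pow k hJ.
  by rewrite FJ_herm // plusp_herm // herm_res.
have hJ := minusp0_anti h.
case o : (odd k).
  by rewrite FJ_anti ?minusp0 ?lie_pow // anti_pow_odd.
have hY := anti_pow_even hJ (negbT o).
by rewrite FJ_herm // minusp_anti // anti_res_even.
Qed.

Lemma tang_t q (J : 'M[R[i]]_n) k :
  (plusp J = 0 -> plusp (FJf q (- ci *: J ^+ k) J) = 0) /\
  (minusp J = 0 -> minusp (FJf q (- ci *: J ^+ k) J) = 0).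
Proof.
split => h.
  have hJ := plusp0_herm h; have hY := herm_pow k hJ.
  by rewrite tFJ_herm ?plusp0 ?lie_pow.
have hJ := minusp0_anti h.
case o : (odd k).
  have hY := anti_pow_odd hJ o.
  by rewrite tFJ_anti // minusp_anti // anti_res_odd.
have hY := anti_pow_even hJ (negbT o).
by rewrite tFJ_herm ?minusp0 ?lie_pow.
Qed.

End P.


Theorem proposition3p8 (R : realType) (n : nat) :
  (* explicit form of E_k^2 = E_{k+1}^1 and ~E_k^2 = ~E_{k+1}^1 *)
  (forall k : nat, (0 < k)%N ->
    let FQ : vfq R n := fun q J j => cre ((J ^+ k) j j) in
    let FJ : vfJ R n := fun q J =>
      (2%:R)^-1 *: lie (Rq q (J ^+ k + adj (J ^+ k)) + (adj (J ^+ k) - J ^+ k)) J in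
    let tFQ : vfq R n := fun q J j => cre ((- ci *: J ^+ k) j j) in
    let tFJ : vfJ R n := fun q J =>
      (2%:R)^-1 *: lie (ci *: Rq q (adj (J ^+ k) - J ^+ k)
                        + ci *: (J ^+ k + adj (J ^+ k))) J in
    (forall EQ EJ, IsHam2 (hk k) EQ EJ <-> agree EQ EJ FQ FJ) /\
    (forall EQ EJ, IsHam1 (hk k.+1) EQ EJ <-> agree EQ EJ FQ FJ) /\
    (forall EQ EJ, IsHam2 (htk k) EQ EJ <-> agree EQ EJ tFQ tFJ) /\
    (forall EQ EJ, IsHam1 (htk k.+1) EQ EJ <-> agree EQ EJ tFQ tFJ)) /\
  (* tangency to M_{0,-}^reg = {J^+ = 0} and M_{0,+}^reg = {J^- = 0} *)
  (forall k : nat, (0 < k)%N -> forall (EQ : vfq R n) (EJ : vfJ R n),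
    [\/ IsHam2 (hk k) EQ EJ, IsHam1 (hk k.+1) EQ EJ,
        IsHam2 (htk k) EQ EJ | IsHam1 (htk k.+1) EQ EJ] ->
    forall q J, reg q ->
      (plusp J = 0 -> plusp (EJ q J) = 0) /\
      (minusp J = 0 -> minusp (EJ q J) = 0)) /\
  (* restrictions V_k^i to M_{0,-}^reg *)
  (forall k : nat, (0 < k)%N -> forall (EQ : vfq R n) (EJ : vfJ R n),
    IsHam2 (hk k) EQ EJ \/ IsHam1 (hk k.+1) EQ EJ ->
    forall q J, reg q -> plusp J = 0 ->
      (forall j, rc (EQ q J j) = (minusp J ^+ k) j j) /\
      minusp (EJ q J) = lie (Rq q (minusp J ^+ k)) (minusp J)) /\
  (* restrictions of ~E_k^i to M_{0,-}^reg vanish *)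
  (forall k : nat, (0 < k)%N -> forall (EQ : vfq R n) (EJ : vfJ R n),
    IsHam2 (htk k) EQ EJ \/ IsHam1 (htk k.+1) EQ EJ ->
    forall q J, reg q -> plusp J = 0 ->
      (forall j, EQ q J j = 0) /\ EJ q J = 0) /\
  (* U^2_{2l-1} = U^1_{2l} = 0 *)
  (forall l : nat, (0 < l)%N -> forall (EQ : vfq R n) (EJ : vfJ R n),
    IsHam2 (hk (2 * l - 1)) EQ EJ \/ IsHam1 (hk (2 * l)) EQ EJ ->
    forall q J, reg q -> minusp J = 0 ->
      (forall j, EQ q J j = 0) /\ EJ q J = 0) /\
  (* ~U^2_{2l} = ~U^1_{2l+1} = 0 *)
  (forall l : nat, (0 < l)%N -> forall (EQ : vfq R n) (EJ : vfJ R n),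
    IsHam2 (htk (2 * l)) EQ EJ \/ IsHam1 (htk (2 * l + 1)) EQ EJ ->
    forall q J, reg q -> minusp J = 0 ->
      (forall j, EQ q J j = 0) /\ EJ q J = 0) /\
  (* U^2_{2l} = U^1_{2l+1} *)
  (forall l : nat, (0 < l)%N -> forall (EQ : vfq R n) (EJ : vfJ R n),
    IsHam2 (hk (2 * l)) EQ EJ \/ IsHam1 (hk (2 * l + 1)) EQ EJ ->
    forall q J, reg q -> minusp J = 0 ->
      (forall j, EQ q J j = cre ((plusp J ^+ (2 * l)) j j)) /\
      plusp (EJ q J) = lie (Rq q (plusp J ^+ (2 * l))) (plusp J)) /\
  (* ~U^2_{2l-1} = ~U^1_{2l} *)
  (forall l : nat, (0 < l)%N -> forall (EQ : vfq R n) (EJ : vfJ R n),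
    IsHam2 (htk (2 * l - 1)) EQ EJ \/ IsHam1 (htk (2 * l)) EQ EJ ->
    forall q J, reg q -> minusp J = 0 ->
      (forall j, EQ q J j = cre ((- ci *: plusp J ^+ (2 * l - 1)) j j)) /\
      plusp (EJ q J) = lie (- ci *: Rq q (plusp J ^+ (2 * l - 1))) (plusp J)).
Proof.
split; [|split; [|split; [|split; [|split; [|split; [|split]]]]]].
- move=> [//|m] _; exact: (P1 m).
- move=> k k0 EQ EJ H q J rq.
  case: H => H.
  + have [_ ->] := agree_h _ _ _ k0 (or_introl H) q J rq; exact: tang_h.
  + have [_ ->] := agree_h _ _ _ k0 (or_intror H) q J rq; exact: tang_h.
  + have [_ ->] := agree_t _ _ _ k0 (or_introl H) q J rq; exact: tang_t.
  + have [_ ->] := agree_t _ _ _ k0 (or_intror H) q J rq; exact: tang_t.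
- move=> k k0 EQ EJ H q J rq hp.
  have [h1 h2] := agree_h _ _ _ k0 H q J rq.
  have hJ := plusp0_herm hp; have hY := herm_pow k hJ.
  rewrite mi_eq //; split.
  + by move=> j; rewrite h1; exact: (herm_diag _ j hY).1.
  + by rewrite h2 FJ_herm // minusp_herm // herm_res.
- move=> k k0 EQ EJ H q J rq hp.
  have [h1 h2] := agree_t _ _ _ k0 H q J rq.
  have hJ := plusp0_herm hp; have hY := herm_pow k hJ.
  split.
  + by move=> j; rewrite h1 mxE cre_mci; exact: (herm_diag _ j hY).2.
  + by rewrite h2 tFJ_herm // lie_pow.
- move=> [//|l] _ EQ EJ H q J rq hm.
  have e1 : (2 * l.+1 - 1 = (2 * l).+1)%N by lia.
  have e2 : (2 * l.+1 = (2 * l).+2)%N by lia.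
  rewrite e1 e2 in H.
  have [h1 h2] := agree_h _ _ _ (ltn0Sn _) H q J rq.
  have hJ := minusp0_anti hm.
  have o : odd (2 * l).+1 by rewrite /= oddM.
  have hY := anti_pow_odd hJ o.
  split.
  + by move=> j; rewrite h1; exact: anti_diag.
  + by rewrite h2 FJ_anti // lie_pow.
- move=> l l0 EQ EJ H q J rq hm.
  rewrite addn1 in H.
  have k0 : (0 < 2 * l)%N by lia.
  have [h1 h2] := agree_t _ _ _ k0 H q J rq.
  have hJ := minusp0_anti hm.
  have o : ~~ odd (2 * l) by rewrite oddM.
  have hY := anti_pow_even hJ o.
  split.
  + by move=> j; rewrite h1 mxE cre_mci; exact: (herm_diag _ j hY).2.
  + by rewrite h2 tFJ_herm // lie_pow.
- move=> l l0 EQ EJ H q J rq hm.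
  rewrite addn1 in H.
  have k0 : (0 < 2 * l)%N by lia.
  have [h1 h2] := agree_h _ _ _ k0 H q J rq.
  have hJ := minusp0_anti hm.
  have o : ~~ odd (2 * l) by rewrite oddM.
  have hY := anti_pow_even hJ o.
  rewrite pl_eq //; split.
  + by move=> j; rewrite h1.
  + by rewrite h2 FJ_herm // plusp_anti // anti_res_even.
- move=> [//|l] _ EQ EJ H q J rq hm.
  have e1 : (2 * l.+1 - 1 = (2 * l).+1)%N by lia.
  have e2 : (2 * l.+1 = (2 * l).+2)%N by lia.
  rewrite e1 e2 in H; rewrite e1.
  have [h1 h2] := agree_t _ _ _ (ltn0Sn _) H q J rq.
  have hJ := minusp0_anti hm.
  have o : odd (2 * l).+1 by rewrite /= oddM.
  have hY := anti_pow_odd hJ o.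
  rewrite pl_eq //; split.
  + by move=> j; rewrite h1.
  + by rewrite h2 tFJ_anti // plusp_anti // anti_res_odd.
Qed.
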